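(* For all integers $t\geq 1$ and $N\geq 0$: $\mathfrak{m}_{\mathrm{odd}}(-2,t;8N+r)\equiv 0\pmod 4$ for $r\in\{3,6\}$; $\mathfrak{m}_{\mathrm{odd}}(-2,t;9N+r)\equiv 0\pmod 4$ for $r\in\{3,6\}$; $\mathfrak{m}_{\mathrm{odd}}(-2,t;8N+7)\equiv 0\pmod 8$.
   Context: For $a\in\{-2,-1,0,1,2\}$ and integer $t\geq0$, the integers $\mathfrak{m}_{\mathrm{odd}}(a,t;n)$ are defined by $\sum_{n\geq0}\mathfrak{m}_{\mathrm{odd}}(a,t;n)q^n=\sum\prod_{k=1}^t\frac{q^{n_k}}{1+aq^{n_k}+q^{2n_k}}$, the sum running over all $t$-tuples of odd positive integers $n_1<n_2<\cdots<n_t$ (for $t=0$ the series is $1$). *)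

(* Defs.v *)
From mathcomp Require Import all_boot all_algebra.
Set Implicit Arguments. Unset Strict Implicit. Unset Printing Implicit Defensive.
Import GRing.Theory.
Local Open Scope ring_scope.

(* Coefficients of the formal power series 1/(1 + a x + x^2) over int:
   c_0 = 1, c_1 = -a, c_j = -a c_{j-1} - c_{j-2}.
   inv_pair a j = (c_j, c_{j+1}). *)
Fixpoint inv_pair (a : int) (j : nat) : int * int :=
  match j with
  | 0 => (1, - a)
  | j'.+1 => let (u, v) := inv_pair a j' in (v, - a * v - u)
  end.

Definition inv_coef (a : int) (j : nat) : int := (inv_pair a j).1.

(* q^n / (1 + a q^n + q^(2n)) = sum_{j>=0} c_j q^(n (j+1)),
   truncated to the terms with j <= M (enough to determine coefficients of q^k, k <= M). *)
Definition term_trunc (a : int) (n M : nat) : {poly int} :=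
  \sum_(j < M.+1) inv_coef a j *: 'X^(n * j.+1).

(* Admissible t-tuples: odd positive integers n_1 < ... < n_t (each <= M;
   larger n_k only contribute to powers q^k with k > M). *)
Definition odd_incr (t M : nat) (n : {ffun 'I_t -> 'I_M.+1}) : bool :=
  [forall i : 'I_t, odd (n i)] && [forall i : 'I_t, forall j : 'I_t, (i < j)%N ==> (n i < n j)%N].

(* m_odd(a,t;M) = coefficient of q^M in
   sum_{odd n_1<...<n_t} prod_k q^{n_k}/(1 + a q^{n_k} + q^{2 n_k}). *)
Definition m_odd (a : int) (t M : nat) : int :=
  (\sum_(n : {ffun 'I_t -> 'I_M.+1} | odd_incr n)
     \prod_(k < t) term_trunc a (n k) M)`_M.

(* Main.v *)
Require Import Defs.
From mathcomp Require Import all_boot all_algebra.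
From mathcomp Require Import ring zify.
Set Implicit Arguments. Unset Strict Implicit. Unset Printing Implicit Defensive.
Import GRing.Theory.
Local Open Scope ring_scope.

Local Notation PR := {poly int}.
Local Notation PS := {poly {poly int}}.

Definition cgr (A : comPzRingType) (m a b : A) := exists h, a - b = m * h.

Section Cgr.
Variables (A : comPzRingType) (m : A).
Lemma cgr_refl a : cgr m a a.
Proof. by exists 0; rewrite subrr mulr0. Qed.
Lemma cgr_sym a b : cgr m a b -> cgr m b a.
Proof. by case=> h e; exists (- h); rewrite mulrN -e opprB. Qed.
Lemma cgr_trans a b c : cgr m a b -> cgr m b c -> cgr m a c.
Proof. by case=> h1 e1 [h2 e2]; exists (h1 + h2); rewrite mulrDr -e1 -e2; ring. Qed.
Lemma cgrD a b c d : cgr m a b -> cgr m c d -> cgr m (a + c) (b + d).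
Proof. by case=> h1 e1 [h2 e2]; exists (h1 + h2); rewrite mulrDr -e1 -e2; ring. Qed.
Lemma cgrN a b : cgr m a b -> cgr m (- a) (- b).
Proof. by case=> h1 e1; exists (- h1); rewrite mulrN -e1; ring. Qed.
Lemma cgrB a b c d : cgr m a b -> cgr m c d -> cgr m (a - c) (b - d).
Proof. by move=> h1 h2; apply: cgrD=> //; apply: cgrN. Qed.
Lemma cgrM a b c d : cgr m a b -> cgr m c d -> cgr m (a * c) (b * d).
Proof.
case=> h1 e1 [h2 e2]; exists (a * h2 + h1 * d).
have -> : a * c - b * d = a * (c - d) + (a - b) * d by ring.
by rewrite e1 e2; ring.
Qed.
Lemma cgr_prod (I : Type) (r : seq I) (P : pred I) (F G : I -> A) :
  (forall i, P i -> cgr m (F i) (G i)) ->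
  cgr m (\prod_(i <- r | P i) F i) (\prod_(i <- r | P i) G i).
Proof.
move=> H; apply: (big_ind2 (fun x y => cgr m x y)) => //; first exact: cgr_refl.
by move=> ? ? ? ? ; apply: cgrM.
Qed.
Lemma cgr_sum (I : Type) (r : seq I) (P : pred I) (F G : I -> A) :
  (forall i, P i -> cgr m (F i) (G i)) ->
  cgr m (\sum_(i <- r | P i) F i) (\sum_(i <- r | P i) G i).
Proof.
move=> H; apply: (big_ind2 (fun x y => cgr m x y)) => //; first exact: cgr_refl.
by move=> ? ? ? ? ; apply: cgrD.
Qed.
Lemma cgr_weak k a b : cgr (m * k) a b -> cgr m a b.
Proof. by case=> h e; exists (k * h); rewrite e mulrA. Qed.
End Cgr.

Lemma inv_pair_m2 (j : nat) : Defs.inv_pair (-2) j = ((j.+1)%:R, (j.+2)%:R).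
Proof.
elim: j => [|j IH]; first by rewrite /= opprK.
rewrite /= IH; congr pair.
rewrite -[j.+3]addn1 -[j.+2]addn1 -[j.+1]addn1 !natrD.
ring.
Qed.

Lemma term_truncE i M : term_trunc (-2) i M =
  \sum_(j < M.+1) (j.+1)%:R * ('X^i) ^+ j.+1.
Proof.
apply: eq_bigr => j _; rewrite /inv_coef inv_pair_m2 /= -exprM mulnC.
by rewrite scaler_nat mulr_natl.
Qed.

Lemma closed_form (z : PR) m :
  (1 - z) ^+ 2 * \sum_(j < m) j.+1%:R * z ^+ j.+1
  = z - m.+1%:R * z ^+ m.+1 + m%:R * z ^+ m.+2.
Proof.
elim: m => [|m IH]; first by rewrite big_ord0 mulr0 mul1r expr1 mul0r addr0 subrr.
rewrite big_ord_recr /= mulrDr IH.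
rewrite !exprSr -[m.+2]addn1 -[m.+1]addn1 !natrD.
ring.
Qed.

Lemma Xsplit (a b : nat) : (a <= b)%N -> ('X^b : PR) = 'X^a * 'X^(b - a).
Proof. by move=> h; rewrite -exprD subnKC. Qed.

Lemma T_cgr M i : (0 < i)%N ->
  cgr ('X^(M.+1) : PR) ((1 - 'X^i) ^+ 2 * term_trunc (-2) i M) ('X^i).
Proof.
move=> i0; rewrite term_truncE closed_form.
have e2 : ('X^i : PR) ^+ M.+2 = 'X^(M.+1) * 'X^(i * M.+2 - M.+1).
  rewrite -exprM -Xsplit //; rewrite -[X in (X <= _)%N]mul1n leq_mul //.
exists ('X^(i * M.+2 - M.+1) * (- M.+2%:R + M.+1%:R * 'X^i)).
rewrite [('X^i) ^+ M.+3]exprS e2; ring.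
Qed.

Lemma T_big M i : (M < i)%N -> cgr ('X^(M.+1) : PR) (term_trunc (-2) i M) 0.
Proof.
move=> iM; rewrite term_truncE.
exists (\sum_(j < M.+1) j.+1%:R * 'X^(i * j.+1 - M.+1)).
rewrite subr0 mulr_sumr; apply: eq_bigr => j _.
rewrite -exprM (Xsplit (a := M.+1)); first ring.
by rewrite -[X in (X <= _)%N]muln1 leq_mul.
Qed.

Definition prd (k : nat) : nat := if k is k'.+1 then k' else 1%N.

Fixpoint dd (n : nat) : nat -> PR :=
  match n with
  | 0 => fun k => (k == 0)%:R
  | n'.+1 => fun k =>
      (1 - 'X^(2 * n') * 'X) ^+ 2 * dd n' k
      + ('X^(2 * n') * 'X) * (2%:R * dd n' k - dd n' (prd k) - dd n' k.+1)
  end.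

Definition relE n j : PR :=
  (1 - 'X^(2 * n) * 'X^(2 * j) * 'X^2) * dd n j.+1
  + ('X^(2 * j) * 'X - 'X^(2 * n) * 'X) * dd n j.

Lemma X2S k : ('X^(2 * k.+1) : PR) = 'X^(2 * k) * 'X^2.
Proof. by rewrite mulnS exprD mulrC. Qed.

Lemma relE0 n j : relE n j = 0.
Proof.
elim: n j => [|n IH] j.
  by case: j => [|j]; rewrite /relE /= ?muln0 ?expr0 ?mul1r; ring.
case: j => [|j].
  transitivity ((1 + 'X^(2*n) * 'X^(2*n) * 'X^4 - 'X^(2*n) * 'X^2) * relE n 0
                 - 'X^(2*n) * 'X * relE n 1); last by rewrite !IH; ring.
  rewrite /relE /= !X2S ?muln0 ?expr0; ring.
transitivity (- 'X^(2*n) * 'X^3 * relE n j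
              + (1 + 'X^(2*n) * 'X^(2*n) * 'X^4) * relE n j.+1
              - 'X^(2*n) * 'X * relE n j.+2); last by rewrite !IH; ring.
rewrite /relE /= !X2S; ring.
Qed.

Lemma sq_step k : (k.+1 ^ 2 = k ^ 2 + 2 * k + 1)%N.
Proof. rewrite !expnS !expn0 !muln1; lia. Qed.

Lemma dd_step n j : cgr ('X^(2 * n) : PR) (dd n j.+1) (- ('X^(2 * j) * 'X) * dd n j).
Proof.
exists ('X^(2 * j) * 'X^2 * dd n j.+1 + 'X * dd n j).
have := relE0 n j; rewrite /relE => e.
transitivity ('X^(2 * n) * ('X^(2 * j) * 'X^2 * dd n j.+1 + 'X * dd n j) +
  ((1 - 'X^(2 * n) * 'X^(2 * j) * 'X^2) * dd n j.+1
  + ('X^(2 * j) * 'X - 'X^(2 * n) * 'X) * dd n j)); first ring.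
by rewrite e addr0.
Qed.

Lemma dd_cgr n k : cgr ('X^(2 * n) : PR) (dd n k) ((-1) ^+ k * 'X^(k ^ 2) * dd n 0).
Proof.
elim: k => [|k IH]; first by rewrite expr0 mul1r (_ : (0 ^ 2 = 0)%N) // expr0 mul1r; apply: cgr_refl.
apply: cgr_trans (dd_step n k) _.
have -> : (-1) ^+ k.+1 * 'X^(k.+1 ^ 2) * dd n 0 =
   - ('X^(2 * k) * 'X) * ((-1) ^+ k * 'X^(k ^ 2) * dd n 0) :> PR.
  by rewrite sq_step !exprD exprS; ring.
by apply: cgrM => //; apply: cgr_refl.
Qed.

Lemma dd_supp n k : (n < k)%N -> dd n k = 0.
Proof.
elim: n k => [|n IH] k nk /=; first by case: k nk.
rewrite !IH //; first (by ring).
- lia.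
- case: k nk => [|[|k]] //= ?; lia.
- lia.
Qed.

Lemma dd_coef0 n k : (dd n k)`_0 = (k == 0%N)%:R.
Proof.
elim: n k => [|n IH] k; first by case: k => [|k]; rewrite /= ?coef1 ?coef0.
by rewrite -horner_coef0 /= !hornerE !horner_coef0 !IH.
Qed.

Fixpoint Vp (k : nat) : {poly int} * {poly int} :=
  match k with
  | 0 => (2%:R, 2%:R - 'X)
  | k'.+1 => let (a, b) := Vp k' in (b, (2%:R - 'X) * b - a)
  end.
Definition Vs k := (Vp k).1.
Definition Vl k : PS := map_poly polyC (Vs k).

Lemma VsSS k : Vs k.+2 = (2%:R - 'X) * Vs k.+1 - Vs k.
Proof. by rewrite /Vs /=; case: (Vp k). Qed.
Lemma Vs0 : Vs 0 = 2%:R. Proof. by []. Qed.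
Lemma Vs1 : Vs 1 = 2%:R - 'X. Proof. by []. Qed.

Lemma VlSS k : Vl k.+2 = (2%:R - 'X) * Vl k.+1 - Vl k.
Proof. by rewrite /Vl VsSS rmorphB rmorphM /= rmorphB /= map_polyX rmorph_nat. Qed.
Lemma Vl0 : Vl 0 = 2%:R. Proof. by rewrite /Vl Vs0 rmorph_nat. Qed.
Lemma Vl1 : Vl 1 = 2%:R - 'X.
Proof. by rewrite /Vl Vs1 rmorphB /= map_polyX rmorph_nat. Qed.

Lemma VlX k : (0 < k)%N -> Vl k * 'X = 2%:R * Vl k - Vl k.+1 - Vl k.-1.
Proof. by case: k => [|k] // _; rewrite VlSS /=; ring. Qed.

Lemma Vs_coef0 k : (Vs k)`_0 = 2%:R.
Proof.
rewrite -horner_coef0.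
have : (Vs k).[0] = 2%:R /\ (Vs k.+1).[0] = 2%:R.
  elim: k => [|k [IH1 IH2]]; first by rewrite Vs0 Vs1 !hornerE.
  by split=> //; rewrite VsSS !hornerE IH1 IH2; ring.
by case.
Qed.

Lemma Vl_coef k t : (Vl k)`_t = ((Vs k)`_t)%:P.
Proof. by rewrite /Vl coef_map. Qed.

Definition LB (B : nat) (D : nat -> PS) : PS :=
  D 0%N + \sum_(1 <= k < B) D k * Vl k.

Definition dXs (D : nat -> PS) k := 2%:R * D k - D (prd k) - D k.+1.

Lemma LB_eq B D E : (forall k, D k = E k) -> LB B D = LB B E.
Proof. by move=> h; rewrite /LB h; congr (_ + _); apply: eq_bigr => k _; rewrite h. Qed.

Lemma LB_lin B (a c : PS) D E :
  LB B (fun k => a * D k + c * E k) = a * LB B D + c * LB B E.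
Proof.
rewrite /LB; under eq_bigr do rewrite mulrDl; rewrite big_split /= mulrDr mulrDr !mulr_sumr.
rewrite (eq_bigr (fun k => a * (D k * Vl k))); last by move=> k _; ring.
rewrite [X in _ + (_ + X) = _](eq_bigr (fun k => c * (E k * Vl k))); last by move=> k _; ring.
ring.
Qed.

Lemma LX b D : (forall k, (b < k)%N -> D k = 0) -> LB b.+2 D * 'X = LB b.+2 (dXs D).
Proof.
move=> dz.
rewrite /LB /dXs mulrDl mulr_suml.
rewrite (eq_big_nat _ _ (F2 := fun k => 2%:R * (D k * Vl k) - D k * Vl k.+1 - D k * Vl k.-1)); last first.
  by move=> k /andP[k1 _]; rewrite -mulrA VlX //; ring.
rewrite [X in _ = _ + X](eq_big_nat _ _ (F2 := fun k => 2%:R * (D k * Vl k) - D k.-1 * Vl k - D k.+1 * Vl k)); last first.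
  by move=> k /andP[k1 _]; case: k k1 => // k _ /=; ring.
rewrite !sumrB -!mulr_sumr.
have eA : \sum_(1 <= k < b.+2) D k * Vl k.+1 = \sum_(1 <= k < b.+2) D k.-1 * Vl k - D 0%N * Vl 1.
  rewrite [in LHS]big_nat_recr //= dz // mul0r addr0 [in RHS]big_nat_recl //=.
  by rewrite addrAC subrr add0r.
have eB : \sum_(1 <= k < b.+2) D k * Vl k.-1 = \sum_(1 <= k < b.+2) D k.+1 * Vl k + 2%:R * D 1%N.
  rewrite [in RHS]big_nat_recr //= dz // mul0r addr0 [in LHS]big_nat_recl //= Vl0.
  by rewrite addrC mulrC.
rewrite eA eB Vl1 /=; ring.
Qed.

Definition Kn n : PS :=
  \prod_(j < n) (((1 - 'X^(2 * j) * 'X) ^+ 2)%:P + ('X^(2 * j) * 'X)%:P * 'X).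

Lemma K_LB n B : (n < B)%N -> Kn n = LB B (fun k => (dd n k)%:P).
Proof.
elim: n B => [|n IH] B nB.
  rewrite /Kn big_ord0 /LB /= big1_seq; first by rewrite addr0.
  move=> k /andP[_]; rewrite mem_index_iota => /andP[k1 _].
  by case: k k1 => // k _ /=; rewrite mul0r.
case: B nB => [|[|b]] // nB.
rewrite /Kn big_ord_recr /= -/(Kn n) (IH b.+2); last by lia.
rewrite mulrDr [_%:P * 'X]mulrC mulrA LX; last by move=> k bk; rewrite dd_supp //; lia.
rewrite [X in _ = X](@LB_eq _ _ (fun k =>
   ((1 - 'X^(2 * n) * 'X) ^+ 2)%:P * (dd n k)%:P +
   ('X^(2 * n) * 'X)%:P * dXs (fun k => (dd n k)%:P) k)).
  by rewrite (LB_lin _ _ _ (fun k => (dd n k)%:P) (dXs (fun k => (dd n k)%:P))); ring.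
move=> k; rewrite /= /dXs.
by rewrite !(rmorphD, rmorphM, rmorphB, rmorph_nat, rmorphXn); ring.
Qed.

Definition Th (B : nat) : PS :=
  1 + \sum_(1 <= k < B) ((-1) ^+ k * 'X^(k ^ 2))%:P * Vl k.
Definition th (B : nat) : PR :=
  1 + \sum_(1 <= k < B) (-1) ^+ k * 'X^(k ^ 2) * 2%:R.

Lemma cgrC (m a b : PR) : cgr m a b -> cgr (m%:P : PS) a%:P b%:P.
Proof. by case=> h e; exists h%:P; rewrite -polyCB e polyCM. Qed.

Lemma cgr_coef (m : PR) (A B : PS) t : cgr m%:P A B -> cgr m (A`_t) (B`_t).
Proof. by case=> h e; exists (h`_t); rewrite -coefB e coefCM. Qed.

Lemma K_cgr n : cgr (('X^(2 * n))%:P : PS) (Kn n) ((dd n 0)%:P * Th n.+1).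
Proof.
rewrite (@K_LB n n.+1) // /LB /Th mulrDr mulr1 mulr_sumr.
apply: cgrD; first exact: cgr_refl.
apply: cgr_sum => k _.
have -> : (dd n 0)%:P * (((-1) ^+ k * 'X^(k ^ 2))%:P * Vl k) =
   (((-1) ^+ k * 'X^(k ^ 2)) * dd n 0)%:P * Vl k.
  by rewrite !polyCM; ring.
by apply: cgrM; [apply: cgrC; exact: dd_cgr | exact: cgr_refl].
Qed.

Lemma Th_coef0 B : (Th B)`_0 = th B.
Proof.
rewrite /Th /th coefD coef1 /= coef_sum; congr (_ + _).
by apply: eq_bigr => k _; rewrite coefCM Vl_coef Vs_coef0 rmorph_nat.
Qed.

Definition Tt M i : PR := term_trunc (-2) i M.
Definition Ep L M : PS := \prod_(i < L | odd i) (1 + (Tt M i)%:P * 'X).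
Definition Kp L : PS := \prod_(i < L | odd i) (((1 - 'X^i) ^+ 2)%:P + ('X^i)%:P * 'X).
Definition Dp L : PR := \prod_(i < L | odd i) (1 - 'X^i) ^+ 2.

Lemma EDK L M : cgr (('X^(M.+1))%:P : PS) (Ep L M * (Dp L)%:P) (Kp L).
Proof.
rewrite /Ep /Dp rmorph_prod -big_split /Kp.
apply: cgr_prod => i oi.
have i0 : (0 < i)%N by move: oi; case: (nat_of_ord i).
case: (T_cgr M i0) => h e.
exists (h%:P * 'X).
transitivity (((1 - 'X^i) ^+ 2 * Tt M i - 'X^i)%:P * 'X).
  by rewrite /= polyCB polyCM; ring.
by rewrite /Tt e polyCM; ring.
Qed.

Lemma Kp_Kn n : Kp (2 * n) = Kn n.
Proof.
rewrite /Kp /Kn big_mkcond /=.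
elim: n => [|n IH]; first by rewrite !big_ord0.
rewrite (_ : (2 * n.+1 = (2 * n).+2)%N); last by lia.
rewrite !big_ord_recr /= IH.
have -> : odd (2 * n) = false by rewrite oddM.
by rewrite /= mulr1 (exprSr 'X (2 * n)).
Qed.

Lemma Ep_ext M L : (M < L)%N -> cgr (('X^(M.+1))%:P : PS) (Ep L M) (Ep M.+1 M).
Proof.
move=> ML.
rewrite /Ep -!(big_mkord (fun i => odd i) (fun i => 1 + (Tt M i)%:P * 'X)).
rewrite (big_cat_nat _ (n := M.+1)) //=.
have H2 : cgr (('X^(M.+1))%:P : PS) (\prod_(M.+1 <= i < L | odd i) (1 + (Tt M i)%:P * 'X))
   (\prod_(M.+1 <= i < L | odd i) (1 : PS)).
  rewrite big_nat_cond [X in cgr _ _ X]big_nat_cond.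
  apply: cgr_prod => i /andP[/andP[Mi _] _].
  case: (T_big (M := M) Mi) => h e.
  exists (h%:P * 'X).
  by rewrite /Tt addrAC subrr add0r; rewrite subr0 in e; rewrite e polyCM mulrA.
move: H2; rewrite [X in cgr _ _ X]big1 // => H2.
rewrite -[X in cgr _ _ X]mulr1.
by apply: cgrM; first exact: cgr_refl.
Qed.

Lemma cancel0 (a b : PR) N : a`_0 = 1 ->
  (forall i, (i < N)%N -> (a * b)`_i = 0) -> forall i, (i < N)%N -> b`_i = 0.
Proof.
move=> a0 H; elim/ltn_ind => i IH iN.
have := H i iN; rewrite coefM big_ord_recl /= subn0 a0 mul1r big1 ?addr0 //.
move=> j _; rewrite IH ?mulr0 //; last by apply: leq_ltn_trans iN; apply: leq_subr.
have := ltn_ord j; rewrite /bump /=; lia.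
Qed.

Lemma Kp_coef0 L : (Kp L)`_0 = Dp L.
Proof.
rewrite -horner_coef0 /Kp horner_prod /Dp; apply: eq_bigr => i _.
by rewrite !hornerE.
Qed.

Lemma cgr_weakX (a b : PR) N N' : (N <= N')%N -> cgr ('X^N') a b -> cgr ('X^N) a b.
Proof. by move=> h; rewrite (Xsplit h); apply: cgr_weak. Qed.

Lemma cgr_weakXP (a b : PS) N N' : (N <= N')%N ->
  cgr (('X^N')%:P : PS) a b -> cgr (('X^N)%:P : PS) a b.
Proof. by move=> h; rewrite (Xsplit h) polyCM; apply: cgr_weak. Qed.

Lemma main_cgr M t :
  let e := (Ep M.+1 M)`_t in
  forall i, (i < M.+1)%N -> (e * th M.+2 - (Th M.+2)`_t)`_i = 0.
Proof.
move=> e.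
set n := M.+1.
have H1 := EDK (2 * n) M.
rewrite Kp_Kn in H1.
have H2 : cgr (('X^(M.+1))%:P : PS) (Kn n) ((dd n 0)%:P * Th n.+1).
  by apply: (@cgr_weakXP _ _ _ (2 * n)); [rewrite /n; lia | apply: K_cgr].
have H3 : cgr ('X^(M.+1) : PR) (Dp (2 * n)) (dd n 0 * th n.+1).
  apply: (@cgr_weakX _ _ _ (2 * n)); first by rewrite /n; lia.
  have := cgr_coef 0 (K_cgr n).
  by rewrite -Kp_Kn Kp_coef0 coefCM Th_coef0.
have H4 := Ep_ext (L := 2 * n) (M := M) ltac:(rewrite /n; lia).
have H5 : cgr (('X^(M.+1))%:P : PS) (Ep M.+1 M * (dd n 0 * th n.+1)%:P)
                                     ((dd n 0)%:P * Th n.+1).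
  apply: cgr_trans H2.
  apply: cgr_trans H1.
  apply: cgrM; first exact: cgr_sym.
  by apply: cgrC; apply: cgr_sym.
have := cgr_coef t H5; rewrite coefMC coefCM -/e => -[h eh].
have : forall i, (i < M.+1)%N -> (dd n 0 * (e * th n.+1 - (Th n.+1)`_t))`_i = 0.
  move=> i iM.
  have -> : dd n 0 * (e * th n.+1 - (Th n.+1)`_t) = e * (dd n 0 * th n.+1) - dd n 0 * (Th n.+1)`_t by ring.
  by rewrite eh coefXnM iM.
by apply: cancel0; rewrite dd_coef0.
Qed.
Section NT.
Local Open Scope nat_scope.
Definition s2 i := exists a b, i = a ^ 2 + b ^ 2.
Definition s3 i := exists a b c, i = a ^ 2 + b ^ 2 + c ^ 2.

Lemma sq8 a : let r := a ^ 2 %% 8 in [|| r == 0, r == 1 | r == 4].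
Proof.
rewrite /= -modnXm; have : a %% 8 < 8 by rewrite ltn_pmod.
by move: (a %% 8) => r; do 8? case: r => [|r] //.
Qed.

Lemma sq9 a : let r := a ^ 2 %% 9 in [|| r == 0, r == 1, r == 4 | r == 7].
Proof.
rewrite /= -modnXm; have : a %% 9 < 9 by rewrite ltn_pmod.
by move: (a %% 9) => r; do 9? case: r => [|r] //.
Qed.

Lemma not_s2_8 M : (M %% 8 == 3) || (M %% 8 == 6) || (M %% 8 == 7) -> ~ s2 M.
Proof.
move=> hM [a [b e]]; move: hM; rewrite e -modnDm.
move: (sq8 a) (sq8 b) => /=; move: (a ^ 2 %% 8) (b ^ 2 %% 8) => x y.
by case/or3P=> /eqP -> ; case/or3P=> /eqP ->.
Qed.

Lemma not_s3_8 M : M %% 8 = 7 -> ~ s3 M.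
Proof.
move=> hM [a [b [c e]]]; move: hM; rewrite e.
have -> : (a ^ 2 + b ^ 2 + c ^ 2) %% 8 = (a ^ 2 %% 8 + b ^ 2 %% 8 + c ^ 2 %% 8) %% 8.
  by move: (a ^ 2) (b ^ 2) (c ^ 2) => x y z; lia.
move: (sq8 a) (sq8 b) (sq8 c) => /=; move: (a ^ 2 %% 8) (b ^ 2 %% 8) (c ^ 2 %% 8) => x y z.
by case/or3P=> /eqP -> ; case/or3P=> /eqP -> ; case/or3P=> /eqP ->.
Qed.

Lemma not_s2_9 M : (M %% 9 == 3) || (M %% 9 == 6) -> ~ s2 M.
Proof.
move=> hM [a [b e]]; move: hM; rewrite e -modnDm.
move: (sq9 a) (sq9 b) => /=; move: (a ^ 2 %% 9) (b ^ 2 %% 9) => x y.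
by case/or4P=> /eqP -> ; case/or4P=> /eqP ->.
Qed.

End NT.

Definition sq (i : nat) := exists a, i = (a ^ 2)%N.
Definition sup (P : nat -> Prop) (p : PR) := forall i, p`_i != 0 -> P i.

Lemma sup_mono (P Q : nat -> Prop) p : (forall i, P i -> Q i) -> sup P p -> sup Q p.
Proof. by move=> h s i /s /h. Qed.

Lemma supD P p q : sup P p -> sup P q -> sup P (p + q).
Proof.
move=> sp sq' i; rewrite coefD.
case: (boolP (p`_i == 0)) => [/eqP -> | /sp //]; rewrite add0r; exact: sq'.
Qed.

Lemma supN P p : sup P p -> sup P (- p).
Proof. by move=> sp i; rewrite coefN oppr_eq0; apply: sp. Qed.

Lemma sup_sum P (I : Type) (r : seq I) (Pr : pred I) (F : I -> PR) :
  (forall i, Pr i -> sup P (F i)) -> sup P (\sum_(i <- r | Pr i) F i).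
Proof.
move=> h; apply: (big_ind (sup P)) => //; last exact: supD.
by move=> i; rewrite coef0 eqxx.
Qed.

Lemma supM P Q p q : sup P p -> sup Q q ->
  sup (fun i => exists j l, i = (j + l)%N /\ P j /\ Q l) (p * q).
Proof.
move=> sp sq' i.
case: (boolP [exists j : 'I_i.+1, p`_j * q`_(i - j) != 0]) => [/existsP[j nz] _ | /existsPn H].
  exists j, (i - j)%N; split; first by have := ltn_ord j; lia.
  split; [apply: sp | apply: sq']; apply: contraNneq nz => ->; by rewrite ?mul0r ?mulr0.
rewrite coefM big1 ?eqxx // => j _; move: (H j); rewrite negbK => /eqP //.
Qed.

Lemma sup_monC (c : int) k : sup sq (c%:P * 'X^(k ^ 2)).
Proof.
move=> i; rewrite coefCM coefXn.
by case: (boolP (i == k ^ 2)%N) => [/eqP -> _| _]; [exists k | rewrite mulr0 eqxx].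
Qed.

Lemma sup_Th t B : sup sq ((Th B)`_t).
Proof.
rewrite /Th coefD coef_sum; apply: supD.
  rewrite coef1; case: (t == 0)%N; last by move=> i; rewrite coef0 eqxx.
  by move=> i; rewrite coef1; case: (i == 0)%N / eqP => [-> _ | _]; [exists 0%N | rewrite eqxx].
apply: sup_sum => k _.
rewrite coefCM Vl_coef.
have -> : (-1) ^+ k * 'X^(k ^ 2) * ((Vs k)`_t)%:P = ((-1) ^+ k * (Vs k)`_t)%:P * 'X^(k ^ 2) :> PR.
  by rewrite polyCM rmorphXn /= polyCN polyC1; ring.
exact: sup_monC.
Qed.

Definition ss (B : nat) : PR := \sum_(1 <= k < B) (-1) ^+ k * 'X^(k ^ 2).

Lemma sup_ss B : sup sq (ss B).
Proof.
apply: sup_sum => k _.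
have -> : (-1) ^+ k * 'X^(k ^ 2) = ((-1) ^+ k)%:P * 'X^(k ^ 2) :> PR.
  by rewrite rmorphXn /= polyCN polyC1.
exact: sup_monC.
Qed.

Lemma th_ss B : th B = 1 + ss B *+ 2.
Proof. by rewrite /th /ss -sumrMnl; congr (_ + _); apply: eq_bigr => k _; rewrite mulr_natr. Qed.

Lemma sup1 : sup sq 1.
Proof. by move=> i; rewrite coef1; case: (i == 0)%N / eqP => [-> _ | _]; [exists 0%N | rewrite eqxx]. Qed.

Lemma low_mul (f g : PR) N : (forall i, (i < N)%N -> f`_i = 0) ->
  forall i, (i < N)%N -> (g * f)`_i = 0.
Proof.
move=> hf i iN; rewrite coefM big1 // => j _; rewrite hf ?mulr0 //.
by apply: leq_ltn_trans iN; apply: leq_subr.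
Qed.

Lemma supMn P p n : sup P p -> sup P (p *+ n).
Proof. by move=> sp i; rewrite coefMn => h; apply: sp; apply: contraNneq h => ->; rewrite mul0rn. Qed.

Definition P2 i := exists j l, i = (j + l)%N /\ sq j /\ sq l.

Lemma sq_P2 i : sq i -> P2 i.
Proof. by move=> h; exists i, 0%N; split; [rewrite addn0 | split=> //; exists 0%N]. Qed.

Lemma P2_s2 i : P2 i -> s2 i.
Proof. by case=> j [l [-> [[a ->] [b ->]]]]; exists a, b. Qed.

Lemma P3_s3 i : (exists j l, i = (j + l)%N /\ sq j /\ P2 l) -> s3 i.
Proof.
by case=> j [l [-> [[a ->] [l1 [l2 [-> [[b ->] [c ->]]]]]]]]; exists a, b, c; rewrite addnA.
Qed.

Lemma final4 M t : ~ s2 M ->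
  ((Ep M.+1 M)`_t)`_M = ((ss M.+2 ^+ 2 * (Ep M.+1 M)`_t)`_M) *+ 4.
Proof.
move=> nM.
set e := (Ep M.+1 M)`_t; set s := ss M.+2; set T := (Th M.+2)`_t.
have hf := @main_cgr M t; rewrite /= -/e in hf.
set f := e * th M.+2 - T in hf.
have E : e = T * (1 - s *+ 2) + (s ^+ 2 * e) *+ 4 + (1 - s *+ 2) * f.
  by rewrite /f th_ss -/s; ring.
rewrite {1}E coefD (low_mul _ hf) // addr0 coefD coefMn.
have -> : (T * (1 - s *+ 2))`_M = 0; last by rewrite add0r.
apply/eqP; apply: contraT => h; exfalso.
apply: nM; apply: P2_s2.
have := supM (@sup_Th t M.+2) (supD sup1 (supN (@supMn _ _ 2 (@sup_ss M.+2)))).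
by move=> /(_ M); rewrite -/T -/s; move/(_ h).
Qed.

Lemma final8 M t : ~ s3 M ->
  ((Ep M.+1 M)`_t)`_M = - ((ss M.+2 ^+ 3 * (Ep M.+1 M)`_t)`_M) *+ 8.
Proof.
move=> nM.
set e := (Ep M.+1 M)`_t; set s := ss M.+2; set T := (Th M.+2)`_t.
have hf := @main_cgr M t; rewrite /= -/e in hf.
set f := e * th M.+2 - T in hf.
have E : e = T * (1 - s *+ 2 + (s * s) *+ 4) - (s ^+ 3 * e) *+ 8
             + (1 - s *+ 2 + (s * s) *+ 4) * f.
  by rewrite /f th_ss -/s; ring.
rewrite {1}E coefD coefB coefMn (low_mul _ hf) // addr0 mulNrn.
have -> : (T * (1 - s *+ 2 + (s * s) *+ 4))`_M = 0; last by rewrite sub0r.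
apply/eqP; apply: contraT => h; exfalso.
apply: nM; apply: P3_s3.
have hs : sup P2 s := sup_mono sq_P2 (@sup_ss M.+2).
have hss : sup P2 (s * s).
  apply: sup_mono (supM (@sup_ss M.+2) (@sup_ss M.+2)).
  by case=> // i [j [l [-> [hj hl]]]]; exists j, l.
have := supM (@sup_Th t M.+2)
   (supD (supD (sup_mono sq_P2 sup1) (supN (@supMn _ _ 2 hs))) (@supMn _ _ 4 hss)).
by move=> /(_ M); rewrite -/T -/s; move/(_ h).
Qed.

Definition incr t L (n : {ffun 'I_t -> 'I_L}) :=
  [forall i : 'I_t, forall j : 'I_t, (i < j)%N ==> (n i < n j)%N].

Definition img t L (n : {ffun 'I_t -> 'I_L}) : {set 'I_L} := [set n k | k : 'I_t].

Lemma ord_sorted t : sorted (fun a b : 'I_t => (a < b)%N) (enum 'I_t).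
Proof. by have := iota_ltn_sorted 0 t; rewrite -val_enum_ord sorted_map. Qed.

Lemma ltv_trans L : transitive (fun a b : 'I_L => (a < b)%N).
Proof. by move=> a b c; apply: ltn_trans. Qed.

Lemma incr_sorted t L (n : {ffun 'I_t -> 'I_L}) : incr n ->
  sorted (fun a b : 'I_L => (a < b)%N) (map n (enum 'I_t)).
Proof.
move=> /forallP h; rewrite sorted_map; apply: sub_sorted (ord_sorted t).
by move=> a b ab; have /forallP/(_ b)/implyP := h a; apply.
Qed.

Lemma incr_inj t L (n : {ffun 'I_t -> 'I_L}) : incr n -> injective n.
Proof.
move=> /forallP h a b e; apply/eqP; case: (ltngtP a b) => //.
- by move=> ab; have /forallP/(_ b)/implyP/(_ ab) := h a; rewrite e ltnn.
- by move=> ab; have /forallP/(_ a)/implyP/(_ ab) := h b; rewrite e ltnn.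
- by move=> ab; apply/eqP; apply: val_inj.
Qed.

Lemma img_mem t L (n : {ffun 'I_t -> 'I_L}) : map n (enum 'I_t) =i img n.
Proof.
move=> x; apply/mapP/imsetP => [[k _ ->] | [k _ ->]]; first by exists k.
by exists k; rewrite ?mem_enum.
Qed.

Lemma img_inj t L (n n' : {ffun 'I_t -> 'I_L}) : incr n -> incr n' -> img n = img n' -> n = n'.
Proof.
move=> hn hn' e.
have := irr_sorted_eq (@ltv_trans L) (fun a => ltnn _) (incr_sorted hn) (incr_sorted hn').
move=> e2.
have {e2} e2 : map n (enum 'I_t) = map n' (enum 'I_t).
  by apply: e2 => x; rewrite !img_mem e.
apply/ffunP => k.
have : nth (n k) (map n (enum 'I_t)) k = nth (n k) (map n' (enum 'I_t)) k by rewrite e2.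
by rewrite !(nth_map k) -?enumT ?size_enum_ord // nth_ord_enum.
Qed.

Lemma enum_sorted L (J : {set 'I_L}) : sorted (fun a b : 'I_L => (a < b)%N) (enum J).
Proof.
rewrite /enum_mem -enumT; apply: sorted_filter; first exact: ltv_trans.
exact: ord_sorted.
Qed.

Lemma img_char t M (J : {set 'I_M.+1}) :
  (J \in [set img n | n in [set n : {ffun 'I_t -> 'I_M.+1} | odd_incr n]])
  = (#|J| == t) && [forall i in J, odd i].
Proof.
apply/imsetP/andP => [[n] | [/eqP cJ /forall_inP oJ]].
  rewrite inE => /andP[/forallP on inc] ->; split.
    by rewrite /img card_imset ?card_ord //; apply: incr_inj.
  by apply/forall_inP => x /imsetP[k _ ->]; apply: on.
set s := enum J.
have ss : size s = t by rewrite -cJ cardE.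
exists [ffun k : 'I_t => nth ord0 s k].
  rewrite inE; apply/andP; split.
    apply/forallP => k; rewrite ffunE; apply: oJ; rewrite -mem_enum; apply: mem_nth.
    by rewrite ss.
  apply/forallP => a; apply/forallP => b; apply/implyP => ab; rewrite !ffunE.
  by apply: (sorted_ltn_nth (@ltv_trans _) ord0 (enum_sorted J)) => //; rewrite inE ss.
apply/setP => x; apply/idP/imsetP => [xJ | [k _ ->]].
  have xs : x \in s by rewrite mem_enum.
  have ix : (index x s < t)%N by rewrite -ss index_mem.
  by exists (Ordinal ix) => //; rewrite ffunE nth_index.
by rewrite ffunE -mem_enum mem_nth // ss.
Qed.

Lemma ffun_sum t M (c : nat -> PR) :
  \sum_(n : {ffun 'I_t -> 'I_M.+1} | odd_incr n) \prod_(k < t) c (n k)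
  = \sum_(J : {set 'I_M.+1} | #|J| == t) \prod_(i in J) (if odd i then c i else 0).
Proof.
rewrite (bigID (fun J : {set 'I_M.+1} => [forall i in J, odd i])) /=.
rewrite [X in _ = _ + X]big1 ?addr0; last first.
  move=> J /andP[_ /forall_inPn [i iJ oi]].
  by rewrite (bigD1 i) //= (negbTE oi) mul0r.
transitivity (\sum_(n in [set n : {ffun 'I_t -> 'I_M.+1} | odd_incr n])
                 \prod_(i in img n) (if odd i then c i else 0)).
  apply: eq_big => n; first by rewrite inE.
  move=> /andP[/forallP on inc].
  rewrite /img big_imset /=; last by move=> a b _ _; apply: incr_inj.
  by apply: eq_big => [k|k _]; rewrite ?on.
transitivity (\sum_(J in [set img n | n in [set n : {ffun 'I_t -> 'I_M.+1} | odd_incr n]])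
                 \prod_(i in J) (if odd i then c i else 0)).
  rewrite big_imset //.
  by move=> a b; rewrite !inE => /andP[_ ha] /andP[_ hb]; apply: img_inj.
by apply: eq_bigl => J; rewrite img_char.
Qed.

Lemma prod_expand L (c : nat -> PR) t :
  (\prod_(i < L | odd i) (1 + (c i)%:P * 'X))`_t
  = \sum_(J : {set 'I_L} | #|J| == t) \prod_(i in J) (if odd i then c i else 0).
Proof.
rewrite big_mkcond /=.
rewrite (eq_bigr (fun i : 'I_L => ((if odd i then c i else 0)%:P * 'X) + 1)); last first.
  by move=> i _; case: (odd i); rewrite ?mul0r ?add0r // addrC.
rewrite bigA_distr coef_sum [RHS]big_mkcond /=.
apply: eq_bigr => J _.
rewrite -big_mkcond /= prodrMr -rmorph_prod coefCM coefXn eq_sym.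
by case: (#|J| == t); rewrite ?mulr1 ?mulr0.
Qed.

Lemma m_oddE t M : m_odd (-2) t M = ((Ep M.+1 M)`_t)`_M.
Proof.
rewrite /m_odd /Ep.
have := @ffun_sum t M (Tt M); rewrite /Tt => ->.
by rewrite -(@prod_expand M.+1 (Tt M)).
Qed.

Lemma dvdMn (x : int) (n : nat) : (n%:Z %| x *+ n)%Z.
Proof. by rewrite -mulr_natr natz; apply: dvdz_mull; exact: dvdzz. Qed.

Lemma dvd4 M t : ~ s2 M -> (4 %| m_odd (-2) t M)%Z.
Proof. by move=> h; rewrite m_oddE final4 //; apply: dvdMn. Qed.

Lemma dvd8 M t : ~ s3 M -> (8 %| m_odd (-2) t M)%Z.
Proof. by move=> h; rewrite m_oddE final8 //; apply: dvdMn. Qed.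
Local Close Scope ring_scope.
Unset Implicit Arguments.

Theorem mainTheorem12 (t N : nat) : (1 <= t)%N ->
  [/\ (forall r : nat, r \in [:: 3; 6]%N -> (4 %| m_odd (-2) t (8 * N + r))%Z),
      (forall r : nat, r \in [:: 3; 6]%N -> (4 %| m_odd (-2) t (9 * N + r))%Z)
    & (8 %| m_odd (-2) t (8 * N + 7))%Z].
Proof.
move=> _; split.
- move=> r; rewrite !inE => hr; apply: dvd4; apply: not_s2_8.
  by case/orP: hr => /eqP ->; apply/orP; [left; apply/orP; left | left; apply/orP; right]; apply/eqP; lia.
- move=> r; rewrite !inE => hr; apply: dvd4; apply: not_s2_9.
  by case/orP: hr => /eqP ->; apply/orP; [left | right]; apply/eqP; lia.
- by apply: dvd8; apply: not_s3_8; lia.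
Qed.
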